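(* Let $m\ge1$, $0\le q\le n$, $p\ge0$ and $1\le k\le n-q$. For $1\le i\le m$ and $1\le j\le n$, $L_{i,2j-1+m}f_{k,p,q}=2k\left(\frac M2+p+q+k-1\right)f_{k-1,p+1,q+1}\,x_i\,\grave{x}_{2j-1}$, where $M=m-2n$.
   Context: On $\mathbb{R}^{m|2n}$ with even $x_1..x_m$ and odd $\grave{x}_1..\grave{x}_{2n}$: $r^2=\sum x_i^2$, $\theta^2=-\sum_{l=1}^n\grave{x}_{2l-1}\grave{x}_{2l}$. The operator is $L_{i,2j-1+m}=2x_i\partial_{\grave{x}_{2j}}-\grave{x}_{2j-1}\partial_{x_i}$. For $0\le k\le n-q$, $f_{k,p,q}=\sum_{s=0}^ka_sr^{2k-2s}\theta^{2s}$ with $a_s=\binom ks\frac{(n-q-s)!}{\Gamma(\frac m2+p+k-s)}\frac{\Gamma(\frac m2+p+k)}{(n-q-k)!}$. *)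

(* Defs.v *)
(* Superpolynomials on R^{m|N} (N = 2n odd generators),
   represented by their coefficient functions on monomials
   x^alpha * grave_x_S, where grave_x_S is the product of the odd
   generators with indices in S taken in increasing order. *)
From HB Require Import structures.
From mathcomp Require Import all_boot all_order all_algebra.
Set Implicit Arguments. Unset Strict Implicit. Unset Printing Implicit Defensive.
Import Order.TTheory GRing.Theory Num.Theory.
Local Open Scope ring_scope.

Definition SP (R : Type) (m N : nat) := {ffun 'I_m -> nat} -> {set 'I_N} -> R.

Section Ops.
Variables (R : realFieldType) (m N : nat).
Local Notation SP := (SP R m N).

Definition sp1 : SP := fun a S => if (a == [ffun=> 0%N]) && (S == set0) then 1 else 0.

Definition exp_dec (i : 'I_m) (a : {ffun 'I_m -> nat}) : {ffun 'I_m -> nat} :=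
  [ffun j => if j == i then (a j).-1 else a j].
Definition exp_inc (i : 'I_m) (a : {ffun 'I_m -> nat}) : {ffun 'I_m -> nat} :=
  [ffun j => if j == i then (a j).+1 else a j].

Definition mulx (i : 'I_m) (f : SP) : SP :=
  fun a S => if (0 < a i)%N then f (exp_dec i a) S else 0.
Definition dx (i : 'I_m) (f : SP) : SP :=
  fun a S => (a i).+1%:R * f (exp_inc i a) S.

Definition sgn_below (b : 'I_N) (S : {set 'I_N}) : R :=
  (-1) ^+ #|[set t in S | (t < b)%N]|.
Definition sgn_above (b : 'I_N) (S : {set 'I_N}) : R :=
  (-1) ^+ #|[set t in S | (b < t)%N]|.

(* left multiplication by the odd variable grave_x_b *)
Definition mulo (b : 'I_N) (f : SP) : SP :=
  fun a S => if b \in S then sgn_below b S * f a (S :\ b) else 0.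
(* right multiplication by the odd variable grave_x_b *)
Definition mulo_r (b : 'I_N) (f : SP) : SP :=
  fun a S => if b \in S then sgn_above b S * f a (S :\ b) else 0.
(* (left) odd partial derivative d/d grave_x_b *)
Definition dodd (b : 'I_N) (f : SP) : SP :=
  fun a S => if b \in S then 0 else sgn_below b S * f a (b |: S).
End Ops.

Lemma oddidx_proof (n : nat) (j : 'I_n) (b : bool) : (2 * j + b < 2 * n)%N.
Proof.
have h := ltn_ord j.
apply: (@leq_trans (2 * j + 2)%N); first by case: b; rewrite ltn_add2l.
by rewrite -[(2 * j + 2)%N]/(2 * j + 2 * 1)%N -mulnDr addn1 leq_mul2l h orbT.
Qed.

(* 0-based index of grave_x_{2j-1} (b = false) or grave_x_{2j} (b = true),
   for the 1-based j = val j + 1 *)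
Definition oi (n : nat) (j : 'I_n) (b : bool) : 'I_(2 * n) :=
  Ordinal (oddidx_proof j b).

Section Fkpq.
Variables (R : realFieldType) (m n : nat).
Local Notation SP := (SP R m (2 * n)).

Definition mul_r2 (f : SP) : SP := fun a S => \sum_(i < m) mulx i (mulx i f) a S.
Definition mul_theta2 (f : SP) : SP :=
  fun a S => - \sum_(l < n) mulo (oi l false) (mulo (oi l true) f) a S.

(* a_s = C(k,s) (n-q-s)!/(n-q-k)! * Gamma(m/2+p+k)/Gamma(m/2+p+k-s),
   the Gamma ratio written out as prod_{t<s} (m/2+p+k-1-t) *)
Definition a_coef (k p q s : nat) : R :=
  'C(k, s)%:R * (((n - q - s)`!)%:R / ((n - q - k)`!)%:R) *
  \prod_(t < s) ((m%:R / 2) + p%:R + k%:R - 1 - t%:R).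

Definition fkpq (k p q : nat) : SP :=
  fun a S => \sum_(s < k.+1)
    a_coef k p q s * iter (k - s) mul_r2 (iter s mul_theta2 (@sp1 R m (2 * n))) a S.

Definition Lop (i : 'I_m) (j : 'I_n) (f : SP) : SP :=
  fun a S => 2 * mulx i (dodd (oi j true) f) a S - mulo (oi j false) (dx i f) a S.
End Fkpq.

(* Main.v *)
Require Import Defs.
From HB Require Import structures.
From mathcomp Require Import all_boot all_order all_algebra.
From mathcomp Require Import ring lra zify.
From Stdlib Require Import FunctionalExtensionality.
Set Implicit Arguments. Unset Strict Implicit. Unset Printing Implicit Defensive.
Import Order.TTheory GRing.Theory Num.Theory.
Local Open Scope ring_scope.

Section Gen.
Variables (R : realFieldType) (m N : nat).
Local Notation SP := (SP R m N).

Lemma fext2 (f g : SP) : (forall a S, f a S = g a S) -> f = g.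
Proof. by move=> h; do 2 (apply: functional_extensionality => ?); apply: h. Qed.

Definition sumlin (Op : SP -> SP) := forall (I : finType) (c : I -> R) (F : I -> SP),
  Op (fun a S => \sum_i c i * F i a S) = fun a S => \sum_i c i * Op (F i) a S.

Lemma simple_sumlin (Op : SP -> SP) (P : {ffun 'I_m -> nat} -> {set 'I_N} -> bool)
  (c : {ffun 'I_m -> nat} -> {set 'I_N} -> R) al be :
  (forall f a S, Op f a S = if P a S then c a S * f (al a S) (be a S) else 0) ->
  sumlin Op.
Proof.
move=> h I c' F; apply: fext2 => a S; rewrite h.
case hP: (P a S).
  by rewrite mulr_sumr; apply: eq_bigr => i _; rewrite h hP mulrCA.
by rewrite big1 // => i _; rewrite h hP mulr0.
Qed.

Section Lin.
Variable Op : SP -> SP.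
Hypothesis hOp : sumlin Op.

Lemma lin_scale x F : Op (fun a S => x * F a S) = fun a S => x * Op F a S.
Proof.
have := hOp (fun _ : 'I_1 => x) (fun _ => F).
have -> : (fun a S => \sum_(i < 1) x * F a S) = (fun a S => x * F a S).
  by apply: fext2 => a S; rewrite big_ord1.
by move=> ->; apply: fext2 => a S; rewrite big_ord1.
Qed.

Lemma lin_add F G : Op (fun a S => F a S + G a S) = fun a S => Op F a S + Op G a S.
Proof.
have := hOp (fun _ : bool => 1) (fun b => if b then F else G).
have -> : (fun a S => \sum_(i : bool) 1 * (if i then F else G) a S) = (fun a S => F a S + G a S).
  by apply: fext2 => a S; rewrite big_bool /= !mul1r.
by move=> ->; apply: fext2 => a S; rewrite big_bool /= !mul1r.
Qed.

Lemma lin_sub F G : Op (fun a S => F a S - G a S) = fun a S => Op F a S - Op G a S.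
Proof.
have := hOp (fun b : bool => if b then 1 else -1) (fun b => if b then F else G).
have -> : (fun a S => \sum_(i : bool) (if i then 1 else -1) * (if i then F else G) a S) = (fun a S => F a S - G a S).
  by apply: fext2 => a S; rewrite big_bool /= mul1r mulN1r.
by move=> ->; apply: fext2 => a S; rewrite big_bool /= mul1r mulN1r.
Qed.

Lemma lin_sum (K : nat) (c : 'I_K -> R) F :
  Op (fun a S => \sum_(i < K) c i * F i a S) = fun a S => \sum_(i < K) c i * Op (F i) a S.
Proof. exact: hOp. Qed.

Lemma lin_sum1 (I : finType) (F : I -> SP) :
  Op (fun a S => \sum_i F i a S) = fun a S => \sum_i Op (F i) a S.
Proof.
have := hOp (fun _ => 1) F.
have -> : (fun a S => \sum_i 1 * F i a S) = (fun a S => \sum_i F i a S).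
  by apply: fext2 => a S; apply: eq_bigr => k _; rewrite mul1r.
by move=> ->; apply: fext2 => a S; apply: eq_bigr => k _; rewrite mul1r.
Qed.

Lemma lin_opp F : Op (fun a S => - F a S) = fun a S => - Op F a S.
Proof.
have := lin_scale (-1) F.
have -> : (fun a S => -1 * F a S) = (fun a S => - F a S).
  by apply: fext2 => a S; rewrite mulN1r.
by move=> ->; apply: fext2 => a S; rewrite mulN1r.
Qed.

Lemma lin_zero : Op (fun _ _ => 0) = fun _ _ => 0.
Proof.
have := hOp (fun _ : 'I_0 => 0) (fun _ => fun _ _ => 0).
have -> : (fun (a : {ffun 'I_m -> nat}) (S : {set 'I_N}) => \sum_(i < 0) (0:R) * 0) = (fun _ _ => 0).
  by apply: fext2 => a S; rewrite big_ord0.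
by move=> ->; apply: fext2 => a S; rewrite big_ord0.
Qed.
End Lin.

Lemma mulx_lin i : sumlin (mulx i).
Proof. by apply: (simple_sumlin (P := fun a S => (0 < a i)%N) (c := fun _ _ => 1) (al := fun a S => exp_dec i a) (be := fun a S => S)) => f a S; rewrite /mulx mul1r. Qed.
Lemma dx_lin i : sumlin (dx i).
Proof. by apply: (simple_sumlin (P := fun a S => true) (c := fun a S => (a i).+1%:R) (al := fun a S => exp_inc i a) (be := fun a S => S)). Qed.
Lemma mulo_lin b : sumlin (mulo b).
Proof. by apply: (simple_sumlin (P := fun a S => b \in S) (c := fun a S => sgn_below R b S) (al := fun a S => a) (be := fun a S => S :\ b)) => f a S; rewrite /mulo /mulo_r. Qed.
Lemma mulo_r_lin b : sumlin (mulo_r b).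
Proof. by apply: (simple_sumlin (P := fun a S => b \in S) (c := fun a S => sgn_above R b S) (al := fun a S => a) (be := fun a S => S :\ b)) => f a S; rewrite /mulo /mulo_r. Qed.
Lemma dodd_lin b : sumlin (dodd b).
Proof. by apply: (simple_sumlin (P := fun a S => b \notin S) (c := fun a S => sgn_below R b S) (al := fun a S => a) (be := fun a S => b |: S)) => f a S; rewrite /dodd; case: ifP. Qed.


Lemma exp_decE (i : 'I_m) a t : exp_dec i a t = if t == i then (a t).-1 else a t.
Proof. by rewrite ffunE. Qed.
Lemma exp_incE (i : 'I_m) a t : exp_inc i a t = if t == i then (a t).+1 else a t.
Proof. by rewrite ffunE. Qed.

Lemma mulxC i i' (f : SP) : mulx i (mulx i' f) = mulx i' (mulx i f).
Proof.
apply: fext2 => a S; rewrite /mulx.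
case: (eqVneq i i') => [->//|ne].
rewrite !exp_decE (negbTE ne) eq_sym (negbTE ne).
have -> : exp_dec i' (exp_dec i a) = exp_dec i (exp_dec i' a).
  by apply/ffunP => t; rewrite !exp_decE; case: (t == i); case: (t == i').
by case: (0 < a i)%N; case: (0 < a i')%N.
Qed.

Lemma dx_mulx i i' (f : SP) :
  dx i (mulx i' f) = fun a S => (i == i')%:R * f a S + mulx i' (dx i f) a S.
Proof.
apply: fext2 => a S; rewrite /mulx /dx.
case: (eqVneq i i') => [<-|ne].
  rewrite exp_incE eqxx /= exp_decE eqxx.
  have -> : exp_dec i (exp_inc i a) = a.
    by apply/ffunP => t; rewrite !ffunE; case: (eqVneq t i) => [->|].
  case ha: (a i) => [|k]; first by rewrite /= mul1r addr0.
  rewrite /=.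
  have -> : exp_inc i (exp_dec i a) = a.
    by apply/ffunP => t; rewrite !ffunE; case: (eqVneq t i) => [->|//]; rewrite ?eqxx ha.
  rewrite -!natr1; ring.
rewrite exp_incE eq_sym (negbTE ne) exp_decE (negbTE ne) mul0r add0r.
have -> : exp_dec i' (exp_inc i a) = exp_inc i (exp_dec i' a).
  apply/ffunP => t; rewrite !ffunE.
  case: (eqVneq t i) => [->|ti]; first by rewrite (negbTE ne).
  by case: (t == i').
by case: (0 < a i')%N; rewrite ?mulr0.
Qed.

Lemma mulx_mulo i b (f : SP) : mulx i (mulo b f) = mulo b (mulx i f).
Proof. by apply: fext2 => a S; rewrite /mulx /mulo; case: (0 < a i)%N; case: (b \in S); rewrite ?mulr0. Qed.
Lemma dx_mulo i b (f : SP) : dx i (mulo b f) = mulo b (dx i f).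
Proof. by apply: fext2 => a S; rewrite /dx /mulo; case: (b \in S); rewrite ?mulr0 // mulrCA. Qed.
Lemma dodd_mulx i b (f : SP) : dodd b (mulx i f) = mulx i (dodd b f).
Proof. by apply: fext2 => a S; rewrite /mulx /dodd; case: (0 < a i)%N; case: (b \in S); rewrite ?mulr0. Qed.

Lemma dx_sp1 i : dx i (@sp1 R m N) = fun _ _ => 0.
Proof.
apply: fext2 => a S; rewrite /dx /sp1.
case: eqP => [h|]; last by rewrite mulr0.
by move/ffunP: h => /(_ i); rewrite !ffunE eqxx.
Qed.
Lemma dodd_sp1 b : dodd b (@sp1 R m N) = fun _ _ => 0.
Proof.
apply: fext2 => a S; rewrite /dodd /sp1; case: ifP => // _.
case: (_ == _) => /=; last by rewrite mulr0.
case: eqP => [h|]; last by rewrite mulr0.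
by move/setP: h => /(_ b); rewrite !inE eqxx.
Qed.

Lemma sb_D1 (b c : 'I_N) (S : {set 'I_N}) : sgn_below R c (S :\ b) = (if (b \in S) && (b < c)%N then -1 else 1) * sgn_below R c S.
Proof.
rewrite /sgn_below.
have -> : [set t in S :\ b | (t < c)%N] = [set t in S | (t < c)%N] :\ b.
  by apply/setP => t; rewrite !inE andbA.
rewrite [in RHS](cardsD1 b [set t in S | (t < c)%N]) exprD inE.
by case: (_ && _) => /=; rewrite ?expr1 ?expr0; ring.
Qed.

Lemma sb_U1 (b c : 'I_N) (S : {set 'I_N}) : b \notin S -> sgn_below R c (b |: S) = (if (b < c)%N then -1 else 1) * sgn_below R c S.
Proof.
move=> bS.
rewrite -[in RHS](setU1K bS) sb_D1 setU11 /=.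
by case: (b < c)%N; rewrite ?mulrA ?mulrNN ?mul1r.
Qed.

Lemma sb_sq (c : 'I_N) (S : {set 'I_N}) : sgn_below R c S * sgn_below R c S = 1.
Proof. by rewrite /sgn_below -exprMn mulrNN mulr1 expr1n. Qed.

Lemma mulo_anti b c (f : SP) : mulo b (mulo c f) = fun a S => - mulo c (mulo b f) a S.
Proof.
apply: fext2 => a S; rewrite /mulo !inE.
case: (eqVneq b c) => [->|ne]; first by rewrite /=; case: (c \in S); rewrite ?mulr0 ?oppr0.
rewrite /=.
case bS: (b \in S); case cS: (c \in S); rewrite ?mulr0 ?oppr0 //.
rewrite setDDl setUC -setDDl !sb_D1 bS cS /=.
case: (ltngtP b c) => [lt|gt|eq]; last by move/val_inj: eq => e; rewrite e eqxx in ne.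
  ring.
ring.
Qed.

Lemma dodd_mulo b c (f : SP) :
  dodd b (mulo c f) = fun a S => (b == c)%:R * f a S - mulo c (dodd b f) a S.
Proof.
apply: fext2 => a S; rewrite /mulo /dodd !inE.
case: (eqVneq b c) => [<-|ne] /=.
  case bS: (b \in S).
    by rewrite setD1K // sb_D1 ltnn andbF mul1r mulrA sb_sq mul1r subrr.
  rewrite setU1K ?bS // sb_U1 ?bS // ltnn mul1r mulrA sb_sq. by rewrite subr0.
case bS: (b \in S); case cS: (c \in S); rewrite ?mulr0 ?mul0r ?subrr ?sub0r ?oppr0 //.
have -> : b |: S :\ c = (b |: S) :\ c.
  by apply/setP => t; rewrite !inE; case: (eqVneq t b) => [->|//]; rewrite ne.
rewrite sb_U1 ?bS // sb_D1 cS /=.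
case: (ltngtP b c) => [lt|gt|eq]; last by move/val_inj: eq => e; rewrite e eqxx in ne.
  ring.
ring.
Qed.


Definition ev (f : SP) := forall a (S : {set 'I_N}), odd #|S| -> f a S = 0.

Lemma ev_sp1 : ev (@sp1 R m N).
Proof. by move=> a S oS; rewrite /sp1; case: (S =P set0) => [e|]; [rewrite e cards0 in oS | rewrite andbF]. Qed.

Lemma ev_mulx i f : ev f -> ev (mulx i f).
Proof. by move=> h a S oS; rewrite /mulx h // if_same. Qed.

Lemma ev_mulo2 b c f : ev f -> ev (mulo b (mulo c f)).
Proof.
move=> h a S oS; rewrite /mulo.
case bS: (b \in S) => //; case cS: (c \in S :\ b); last by rewrite mulr0.
rewrite h ?mulr0 // ?mulr0.
move: oS; rewrite (cardsD1 b S) (cardsD1 c (S :\ b)) bS cS /=.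
  by rewrite !oddD /= negbK.
Qed.

Lemma ev_sum (I : finType) (c : I -> R) F : (forall i, ev (F i)) ->
  ev (fun a S => \sum_i c i * F i a S).
Proof. by move=> h a S oS; rewrite big1 // => i _; rewrite h ?mulr0. Qed.

Lemma card_split (b : 'I_N) (S : {set 'I_N}) :
  #|S :\ b| = (#|[set t in S | (t < b)%N]| + #|[set t in S | (b < t)%N]|)%N.
Proof.
rewrite -(cardsID [set t : 'I_N | (t < b)%N] (S :\ b)).
congr addn; apply/eq_card => t; rewrite !inE;
  case: (ltngtP t b) => h; rewrite ?andbT ?andbF //=.
- by rewrite -val_eqE /= (ltn_eqF h).
- by rewrite -val_eqE /= eq_sym (ltn_eqF h).
- by rewrite -val_eqE /= h eqxx.
Qed.

Lemma mulo_r_ev b f : ev f -> mulo_r b f = mulo b f.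
Proof.
move=> h; apply: fext2 => a S; rewrite /mulo_r /mulo.
case bS: (b \in S) => //.
case o: (odd #|S :\ b|); first by rewrite h ?mulr0.
move: o; rewrite card_split oddD => /negbT; rewrite negb_add => /eqP e.
by rewrite /sgn_above /sgn_below -signr_odd -e signr_odd.
Qed.

End Gen.

Lemma sum_ind (R : realFieldType) (K : finType) (i : K) (F : K -> R) : \sum_(i' : K) (i == i')%:R * F i' = F i.
Proof.
rewrite (bigD1 i) //= eqxx mul1r big1 ?addr0 // => i' ne.
by rewrite eq_sym (negbTE ne) mul0r.
Qed.

Lemma oi_tt n (j l : 'I_n) : (oi j true == oi l true) = (j == l).
Proof. by rewrite -val_eqE /= eqn_add2r eqn_pmul2l. Qed.
Lemma oi_tf n (j l : 'I_n) : (oi j true == oi l false) = false.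
Proof.
apply/negbTE/eqP => h; move: (congr1 (fun x : 'I_(2 * n) => odd x) h) => /=.
by rewrite !oddD /= !addbF !addbb.
Qed.

Section Spec.
Variables (R : realFieldType) (m n : nat).
Local Notation SP := (SP R m (2 * n)).
Local Notation U := (@mul_r2 R m n).
Local Notation T := (@mul_theta2 R m n).

Lemma U_lin : sumlin U.
Proof.
move=> I c F; apply: fext2 => a S; rewrite /mul_r2.
under eq_bigr do rewrite (mulx_lin _ c F) (mulx_lin _ c).
rewrite exchange_big /=; apply: eq_bigr => k _; by rewrite mulr_sumr.
Qed.

Lemma T_lin : sumlin T.
Proof.
move=> I c F; apply: fext2 => a S; rewrite /mul_theta2.
under eq_bigr do rewrite (mulo_lin _ c F) (mulo_lin _ c).
rewrite exchange_big /= -sumrN; apply: eq_bigr => k _; by rewrite mulrN mulr_sumr.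
Qed.

Lemma mulx_U i (f : SP) : mulx i (U f) = U (mulx i f).
Proof.
apply: fext2 => a S; rewrite /mul_r2 (lin_sum1 (mulx_lin i)).
by apply: eq_bigr => i' _; rewrite mulxC [mulx i (mulx i' f)]mulxC.
Qed.

Lemma mulo_U b (f : SP) : mulo b (U f) = U (mulo b f).
Proof.
apply: fext2 => a S; rewrite /mul_r2 (lin_sum1 (mulo_lin b)).
by apply: eq_bigr => i' _; rewrite -!mulx_mulo.
Qed.

Lemma dodd_U b (f : SP) : dodd b (U f) = U (dodd b f).
Proof.
apply: fext2 => a S; rewrite /mul_r2 (lin_sum1 (dodd_lin b)).
by apply: eq_bigr => i' _; rewrite !dodd_mulx.
Qed.

Lemma dx_U i (f : SP) : dx i (U f) = fun a S => 2 * mulx i f a S + U (dx i f) a S.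
Proof.
apply: fext2 => a S; rewrite /mul_r2 (lin_sum1 (dx_lin i)).
under eq_bigr do rewrite dx_mulx dx_mulx (lin_add (mulx_lin _)) (lin_scale (mulx_lin _)).
rewrite !big_split /= sum_ind; ring.
Qed.

Lemma mulx_T i (f : SP) : mulx i (T f) = T (mulx i f).
Proof.
apply: fext2 => a S; rewrite /mul_theta2 (lin_opp (mulx_lin i)) (lin_sum1 (mulx_lin i)).
by congr (- _); apply: eq_bigr => l _; rewrite !mulx_mulo.
Qed.

Lemma dx_T i (f : SP) : dx i (T f) = T (dx i f).
Proof.
apply: fext2 => a S; rewrite /mul_theta2 (lin_opp (dx_lin i)) (lin_sum1 (dx_lin i)).
by congr (- _); apply: eq_bigr => l _; rewrite !dx_mulo.
Qed.

Lemma mulo_T b (f : SP) : mulo b (T f) = T (mulo b f).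
Proof.
apply: fext2 => a S; rewrite /mul_theta2 (lin_opp (mulo_lin b)) (lin_sum1 (mulo_lin b)).
congr (- _); apply: eq_bigr => l _.
by rewrite mulo_anti /= [mulo b (mulo _ f)]mulo_anti (lin_opp (mulo_lin _)) opprK.
Qed.


Lemma dodd_T (j : 'I_n) (f : SP) : dodd (oi j true) (T f) =
  fun a S => mulo (oi j false) f a S + T (dodd (oi j true) f) a S.
Proof.
apply: fext2 => a S; rewrite /mul_theta2 (lin_opp (dodd_lin _)) (lin_sum1 (dodd_lin _)).
under eq_bigr do rewrite dodd_mulo /= oi_tf mul0r sub0r dodd_mulo oi_tt (lin_sub (mulo_lin _)) (lin_scale (mulo_lin _)) opprB.
rewrite sumrB opprB.
by rewrite sum_ind.
Qed.

Lemma mulx_iterU i a (f : SP) : mulx i (iter a U f) = iter a U (mulx i f).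
Proof. by elim: a => //= a IH; rewrite mulx_U IH. Qed.
Lemma mulo_iterU b a (f : SP) : mulo b (iter a U f) = iter a U (mulo b f).
Proof. by elim: a => //= a IH; rewrite mulo_U IH. Qed.
Lemma dodd_iterU b a (f : SP) : dodd b (iter a U f) = iter a U (dodd b f).
Proof. by elim: a => //= a IH; rewrite dodd_U IH. Qed.
Lemma iterU_scale a x (f : SP) : iter a U (fun A S => x * f A S) = fun A S => x * iter a U f A S.
Proof. by elim: a => //= a IH; rewrite IH (lin_scale U_lin). Qed.
Lemma mulo_iterT b s (f : SP) : mulo b (iter s T f) = iter s T (mulo b f).
Proof. by elim: s => //= s IH; rewrite mulo_T IH. Qed.
Lemma dx_iterT i s (f : SP) : dx i (iter s T f) = iter s T (dx i f).
Proof. by elim: s => //= s IH; rewrite dx_T IH. Qed.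
Lemma iterT_zero s : iter s T (fun _ _ => 0) = (fun _ _ => 0 : R).
Proof. by elim: s => //= s IH; rewrite IH (lin_zero T_lin). Qed.

Lemma dx_iterT_sp1 i s : dx i (iter s T (@sp1 R m (2 * n))) = fun _ _ => 0.
Proof. by rewrite dx_iterT dx_sp1 iterT_zero. Qed.

Lemma dodd_iterT (j : 'I_n) s : dodd (oi j true) (iter s T (@sp1 R m (2 * n))) =
  fun A S => s%:R * mulo (oi j false) (iter s.-1 T (@sp1 R m (2 * n))) A S.
Proof.
elim: s => [|s IH] /=.
  by rewrite dodd_sp1; apply: fext2 => A S; rewrite mul0r.
rewrite dodd_T IH (lin_scale T_lin); apply: fext2 => A S.
case: s {IH} => [|s] /=; first by rewrite mul0r addr0 mul1r.
rewrite mulo_T -[s.+2%:R]natr1; ring.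
Qed.

Lemma dx_iterU i a (h : SP) : dx i h = (fun _ _ => 0) ->
  dx i (iter a U h) = fun A S => (2 * a)%:R * mulx i (iter a.-1 U h) A S.
Proof.
move=> h0; elim: a => [|a IH] /=.
  by rewrite h0; apply: fext2 => A S; rewrite mul0r.
rewrite dx_U IH (lin_scale U_lin); apply: fext2 => A S.
case: a {IH} => [|a] /=; first by rewrite !muln0 mul0r addr0 muln1.
rewrite mulx_U !natrM -[a.+2]addn1 -[a.+1]addn1 !natrD; ring.
Qed.

Definition gg a s : SP := iter a U (iter s T (@sp1 R m (2 * n))).

Lemma Lop_g (i : 'I_m) (j : 'I_n) a s : Lop i j (gg a s) =
  fun A S => 2 * s%:R * mulo (oi j false) (mulx i (gg a s.-1)) A S
           - 2 * a%:R * mulo (oi j false) (mulx i (gg a.-1 s)) A S.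
Proof.
apply: fext2 => A S; rewrite /Lop /gg.
rewrite dodd_iterU dodd_iterT iterU_scale (lin_scale (mulx_lin _)) -mulo_iterU mulx_mulo.
rewrite (dx_iterU _ (dx_iterT_sp1 _ _)) (lin_scale (mulo_lin _)) natrM; ring.
Qed.

Lemma ev_gg a s : ev (gg a s).
Proof.
rewrite /gg; elim: a => [|a IH] /=.
  elim: s => [|s IH] /=; first exact: ev_sp1.
  move=> A S oS; rewrite /mul_theta2 big1 ?oppr0 // => l _; exact: ev_mulo2.
move=> A S oS; rewrite /mul_r2 big1 // => l _; apply: ev_mulx => //; exact: ev_mulx.
Qed.

End Spec.

Lemma coef_id (R : realFieldType) m n K p q t : (q <= n)%N -> (K.+1 <= n - q)%N -> (t < K.+1)%N ->
 2 * (t.+1)%:R * a_coef R m n K.+1 p q t.+1 - 2 * (K.+1 - t)%:R * a_coef R m n K.+1 p q t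
 = 2 * K.+1%:R * ((m%:R - 2 * n%:R) / 2 + p%:R + q%:R + K.+1%:R - 1) * a_coef R m n K p.+1 q.+1 t.
Proof.
move=> hq hK ht; rewrite /a_coef big_ord_recr /=.
set P := \prod_(i < t) _.
have -> : \prod_(t0 < t) (m%:R / 2 + p.+1%:R + K%:R - 1 - t0%:R) = P :> R.
  by apply: eq_bigr => r _; rewrite -!natr1; ring.
have e1 : (n - q.+1 - t = n - q - t.+1)%N by lia.
have e2 : (n - q.+1 - K = n - q - K.+1)%N by lia.
have e3 : (n - q - t = (n - q - t.+1).+1)%N by lia.
rewrite e1 e2 e3 factS natrM.
have eN : ((n - q - t.+1).+1%:R : R) = n%:R - q%:R - t%:R.
  have eN' : ((n - q - t.+1).+1 + q + t = n)%N by lia.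
  by rewrite -[in RHS]eN' !natrD; ring.
have h1 : (t.+1%:R * 'C(K.+1, t.+1)%:R : R) = K.+1%:R * 'C(K, t)%:R.
  by rewrite -!natrM -mul_bin_diag.
have h2 : ((K.+1 - t)%:R * 'C(K.+1, t)%:R : R) = K.+1%:R * 'C(K, t)%:R.
  by rewrite -!natrM -mul_bin_down.
set F := (n - q - t.+1)`!%:R; set Z := (n - q - K.+1)`!%:R.
set X1 := 'C(K.+1, t.+1)%:R; set X0 := 'C(K.+1, t)%:R.
set t1 := t.+1%:R; set kt := (K.+1 - t)%:R.
transitivity (2 * (t1 * X1) * (F / Z) * P * (m%:R / 2 + p%:R + K.+1%:R - 1 - t%:R)
   - 2 * (kt * X0) * (n - q - t.+1).+1%:R * (F / Z) * P); first by ring.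
rewrite h1 h2 eN -!natr1; field; by rewrite pnatr_eq0 -lt0n fact_gt0.
Qed.

Theorem lemma6p2 (R : realFieldType) (m n p q k : nat) (i : 'I_m) (j : 'I_n) :
  (1 <= m)%N -> (q <= n)%N -> (1 <= k)%N -> (k <= n - q)%N ->
  Lop i j (@fkpq R m n k p q) =
  (fun a S =>
     2 * k%:R * ((m%:R - 2 * n%:R) / 2 + p%:R + q%:R + k%:R - 1) *
     mulo_r (oi j false) (mulx i (@fkpq R m n (k - 1) p.+1 q.+1)) a S).
Proof.
move=> hm hq hk hkn.
case: k hk hkn => [//|K] _ hkn.
rewrite subn1 /=.
set c := a_coef R m n K.+1 p q. set d := a_coef R m n K p.+1 q.+1.
have E1 : fkpq R K.+1 p q = fun A S => \sum_(s < K.+2) c s * @gg R m n (K.+1 - s)%N s A S by [].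
have E2 : fkpq R K p.+1 q.+1 = fun A S => \sum_(t < K.+1) d t * @gg R m n (K - t)%N t A S by [].
rewrite E1 E2 mulo_r_ev; last first.
  by apply: ev_mulx; apply: ev_sum => t; exact: ev_gg.
rewrite (lin_sum (mulx_lin _)) (lin_sum (mulo_lin _)).
apply: fext2 => A S.
transitivity (\sum_(s < K.+2) c s * Lop i j (@gg R m n (K.+1 - s)%N s) A S).
  rewrite /Lop (lin_sum (dodd_lin _)) (lin_sum (mulx_lin _)) (lin_sum (dx_lin _)) (lin_sum (mulo_lin _)) mulr_sumr -sumrB.
  by apply: eq_bigr => s _; ring.
set G := fun t : nat => mulo (oi j false) (mulx i (@gg R m n (K - t)%N t)) A S.
under eq_bigr => s _ do rewrite Lop_g.
transitivity (\sum_(s < K.+2) (c s * (2 * s%:R) * G s.-1) - \sum_(s < K.+2) (c s * (2 * (K.+1 - s)%:R) * G s)).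
  rewrite -sumrB; apply: eq_bigr => -[[|s] hs] _ /=; rewrite /G.
    by rewrite !subn0 /=; ring.
  by rewrite subSS subnS; ring.
rewrite [X in X - _]big_ord_recl [X in _ - X]big_ord_recr /=.
rewrite subnn ?mulr0n ?mulr0 ?mul0r add0r addr0.
rewrite mulr_sumr -sumrB; apply: eq_bigr => t _.
rewrite /bump /= add1n.
transitivity ((2 * t.+1%:R * c t.+1 - 2 * (K.+1 - t)%:R * c t) * G t); first by ring.
rewrite /c /d coef_id //; rewrite /G; ring.
Qed.
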